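(* For any $a,b>0$, \[ a\sharp b+\gamma(a,b)\,L(a,b)\le a\nabla b,\qquad\text{where}\qquad \gamma(a,b):=\frac{\ln^{2}(b/a)}{2\left(\ln^{2}(b/a)+4\right)}\ \ (\ge 0). \]
   Context: $a\sharp b=\sqrt{ab}$, $a\nabla b=\frac{a+b}{2}$, and $L(a,b)=\frac{b-a}{\ln b-\ln a}$ for $a\ne b$ is the logarithmic mean, with the usual convention $L(a,a)=a$. *)

(* Defs.v *)
From Stdlib Require Import Reals.
Open Scope R_scope.

Definition gmean (a b : R) : R := sqrt (a * b).
Definition amean (a b : R) : R := (a + b) / 2.
Definition logmean (a b : R) : R :=
  if Req_EM_T a b then a else (b - a) / (ln b - ln a).
Definition gamma_coef (a b : R) : R :=
  (ln (b / a)) ^ 2 / (2 * ((ln (b / a)) ^ 2 + 4)).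

(* Main.v *)
Require Import Defs.
From Stdlib Require Import Reals Lra Psatz.
From Coquelicot Require Import Coquelicot.
Open Scope R_scope.

Lemma exp2 (x : R) : 0 <= x -> 1 + x + x^2/2 <= exp x.
Proof.
  intros hx. destruct (Req_dec x 0) as [->|hx0].
  { rewrite exp_0. lra. }
  destruct (MVT_cor2 (fun y => exp y - y - y^2/2) (fun y => exp y - 1 - y) 0 x) as [c [hc1 hc2]].
  - lra.
  - intros c _. apply is_derive_Reals. auto_derive; auto. lra.
  - rewrite exp_0 in hc1. pose proof (exp_ineq1_le c). nra.
Qed.

Lemma key0 (l : R) : 0 < l -> l * (exp (l/2) + 1) <= (l^2 + 4) * (exp (l/2) - 1).
Proof.
  intros hl. pose proof (exp2 (l/2) ltac:(lra)) as hw.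
  assert (0 <= (exp (l/2) - (1 + l/2 + (l/2)^2/2)) * (l^2 - l + 4)) by
    (apply Rmult_le_pos; nra).
  nra.
Qed.

Lemma key (p q : R) : 0 < p -> p < q ->
  2 * (ln q - ln p) * (q + p) <= (4 * (ln q - ln p)^2 + 4) * (q - p).
Proof.
  intros hp hpq.
  set (l := 2 * (ln q - ln p)).
  assert (hl : 0 < l). { unfold l. pose proof (ln_increasing p q hp hpq). lra. }
  assert (he : exp (l/2) = q / p).
  { replace (l/2) with (ln q - ln p) by (unfold l; lra).
    unfold Rminus; rewrite exp_plus, exp_Ropp, !exp_ln; [unfold Rdiv; ring|lra|lra]. }
  pose proof (key0 l hl) as k. rewrite he in k.
  replace (4 * (ln q - ln p)^2 + 4) with (l^2+4) by (unfold l; ring).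
  apply Rmult_le_compat_r with (r := p) in k; [|lra].
  replace (l * (q / p + 1) * p) with (l * (q + p)) in k by (field; lra).
  replace ((l ^ 2 + 4) * (q / p - 1) * p) with ((l^2+4)*(q-p)) in k by (field; lra).
  exact k.
Qed.

Theorem corollary2p5 (a b : R) (ha : 0 < a) (hb : 0 < b) :
  gmean a b + gamma_coef a b * logmean a b <= amean a b.
Proof.
  unfold gmean, amean, gamma_coef, logmean.
  destruct (Req_EM_T a b) as [<-|hab].
  { replace (a / a) with 1 by (field; lra). rewrite ln_1.
    rewrite sqrt_square by lra. lra. }
  set (p := sqrt a). set (q := sqrt b).
  assert (hp : 0 < p) by (apply sqrt_lt_R0; lra).
  assert (hq : 0 < q) by (apply sqrt_lt_R0; lra).
  assert (ea : a = p * p) by (unfold p; rewrite sqrt_sqrt; lra).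
  assert (eb : b = q * q) by (unfold q; rewrite sqrt_sqrt; lra).
  assert (eab : sqrt (a * b) = p * q) by (unfold p, q; apply sqrt_mult; lra).
  assert (ela : ln a = 2 * ln p) by (rewrite ea, ln_mult; lra).
  assert (elb : ln b = 2 * ln q) by (rewrite eb, ln_mult; lra).
  rewrite ln_div by lra. rewrite eab, ela, elb.
  assert (hpq : p <> q) by (intro E; apply hab; rewrite ea, eb, E; reflexivity).
  set (m := ln q - ln p).
  assert (hm : m <> 0).
  { unfold m. intro E. apply hpq. apply ln_inv; lra. }
  replace (2 * ln q - 2 * ln p) with (2 * m) by (unfold m; ring).
  rewrite ea, eb.
  replace ((2 * m) ^ 2 / (2 * ((2 * m) ^ 2 + 4)) * ((q * q - p * p) / (2 * m)))
    with (m * (q - p) * (q + p) / (4 * m^2 + 4)) by (field; nra).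
  assert (hd : 0 < 4 * m^2 + 4) by nra.
  assert (K : m * (q - p) * (q + p) <= (2 * (q - p)^2) * (m^2 + 1)).
  { destruct (Rlt_or_le p q) as [h|h].
    - pose proof (key p q hp h) as k. fold m in k. nra.
    - assert (h' : q < p) by lra.
      pose proof (key q p hq h') as k.
      replace (ln p - ln q) with (- m) in k by (unfold m; ring). nra. }
  assert (H2 : m * (q - p) * (q + p) / (4 * m ^ 2 + 4) <= (q - p)^2 / 2).
  { apply Rmult_le_reg_r with (r := 4 * m^2 + 4); [exact hd|].
    replace (m * (q - p) * (q + p) / (4 * m ^ 2 + 4) * (4 * m ^ 2 + 4))
      with (m * (q - p) * (q + p)) by (field; lra).
    nra. }
  nra.
Qed.
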